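(* In any execution of $\mathcal{U}$, if some process executes line 6 for operation $o$ at time $T$ (that is, in that iteration it read from $S$ at line 5 a tuple whose time field is $t(o)$ and whose pointer field is $h(o)$), then $o$ is done at time $T$.
   Context: Model: an asynchronous shared-memory system with possibly infinitely many processes, any of which may crash, communicating via atomic shared objects. A fetch-and-increment (F\&I) object stores an integer; F\&I$(C)$ atomically returns the current value and increments it. A generalized-compare-and-swap (GCAS) object $O$ stores a value and supports Read$(O)$ and GCAS$(c, O, v_1, v_2)$, which atomically does: if $c(\text{current value of } O, v_1)$ holds then set $O := v_2$ and return true, else return false. Tuples are compared componentwise for $=$; GCAS$(>, A, (t,-,-), v)$ succeeds iff the time field of $A$ is strictly greater than $t$. Implemented type $\mathcal{T} = (OP, RES, Q, \delta)$ with initial state $s_0$; a procedure $apply_{\mathcal{T}}(o,s)$ returns some $(s',r)$ with $(s,o,s',r)\in\delta$. $NULL$ is a value different from every response of $\mathcal{T}$, and $NOOP$ is a name different from every operation of $\mathcal{T}$. Algorithm $\mathcal{U}$: each process $p$ owns a GCAS object $H_p$ with fields $(time, response)$. Shared objects: F\&I object $C$, initially $1$; GCAS object $A$ with fields $(time, op, ptr)$, initially $(0, NOOP, h(NOOP))$, where $h(NOOP)$ is a pointer to an immutable location containing $(0,\perp)$; GCAS object $S$ with fields $(time, state, response, ptr)$, initially $(0, s_0, \perp, h(NOOP))$. Process $p$ performs operation $o$ by calling DoOp$(o)$: (1) DoOp$(o)$ invoked; (2) $t := $ F\&I$(C)$; (3) $H_p := (t, NULL)$; (4) while $H_p = (t,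 NULL)$ do: (5) $(t^*, s^*, r^*, roptr^* ) := S$; (6) GCAS$(=, *roptr^*, (t^*, NULL), (t^*, r^* ))$; (7) GCAS$(>, A, (t,-,-), (t, o, \&H_p))$; (8) $(t', o', roptr') := A$; (9) $(\hat t, \hat r) := *roptr'$; (10) if $(\hat t,\hat r) = (t', NULL)$ then (11) $(s', r') := apply_{\mathcal{T}}(o', s^* )$; (12) GCAS$(=, S, (t^*,s^*,r^*,roptr^* ), (t', s', r', roptr'))$; (13) else GCAS$(=, A, (t', o', roptr'), (t, o, \&H_p))$; end while; (14) return $H_p.response$. Notation: an ''operation'' $o$ means one invocation of DoOp$(o)$ (or the initial $NOOP$). $p(o)$ is the process executing it; $t(o)$ is the value returned by its F\&I at line 2, or $\infty$ if line 2 has not been executed; $h(o)$ is $H_{p(o)}$. For $NOOP$: $t(NOOP)=0$ and $h(NOOP)$ is the immutable location containing $(0,\perp)$. Operation $o$ is done at time $T$ if at some time $T'\le T$, $h(o) = (t(o), r)$ with $r \neq NULL$. ''Operation $o$ is stored in $S$'' means $S = (t(o), -, r, h(o))$ for some $r$; ''line 12 is executed for $o$'' means the new value written in that GCAS has time field $t(o)$ and pointer field $h(o)$. *)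

(* Defs.v *)
From Stdlib Require Import Arith.

Set Implicit Arguments.

Inductive OpName (OP : Type) : Type := NOOP | OpN (o : OP).
Arguments NOOP {OP}.

(* Values of response fields: NULL, the initial value bottom, or a response
   of T.  NULL and bottom are distinct from each other and from every response. *)
Inductive Resp (RES : Type) : Type := RNull | RBot | RVal (r : RES).
Arguments RNull {RES}.
Arguments RBot {RES}.

(* Pointers: h(NOOP) (immutable location containing (0, bottom)) or &H_p. *)
Inductive Ptr : Type := PNoop | PH (p : nat).

(* Program counter: Idle (no pending DoOp) or the next line to execute.
   Lines 10 and 11 are purely local; they are folded into lines 9 and 12. *)
Inductive PC : Type := Idle | L2 | L3 | L4 | L5 | L6 | L7 | L8 | L9 | L12 | L13 | L14.

Section Model.
Variables (OP RES Q : Type) (s0 : Q) (applyT : OP -> Q -> Q * RES).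

(* apply on NOOP never happens in U (a NOOP in A is never found with a NULL
   response); a dummy value is used to make the function total. *)
Definition applyU (o : OpName OP) (s : Q) : Q * Resp RES :=
  match o with
  | NOOP => (s, RBot)
  | OpN o => let (s', r) := applyT o s in (s', RVal r)
  end.

Record Local : Type := mkLocal {
  pc : PC;
  cnt : nat;            (* number of DoOp invocations started so far *)
  myop : OpName OP;
  lt : nat;
  ts : nat;
  ss : Q;
  rs : Resp RES;
  ps : Ptr;
  tA : nat;
  oA : OpName OP;
  pA : Ptr
}.

Definition local0 : Local :=
  mkLocal Idle 0 NOOP 0 0 s0 RBot PNoop 0 NOOP PNoop.

Record Config : Type := mkConfig {
  Cv : nat;
  Av : nat * OpName OP * Ptr;
  Sv : nat * Q * Resp RES * Ptr;
  Hv : nat -> nat * Resp RES;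
  Lv : nat -> Local
}.

Definition config0 : Config :=
  mkConfig 1 (0, NOOP, PNoop) (0, s0, RBot, PNoop) (fun _ => (0, RNull))
           (fun _ => local0).

Definition upd {X : Type} (f : nat -> X) (p : nat) (x : X) : nat -> X :=
  fun q => if Nat.eqb q p then x else f q.

Definition deref (c : Config) (ptr : Ptr) : nat * Resp RES :=
  match ptr with
  | PNoop => (0, RBot)
  | PH q => Hv c q
  end.

(* GCAS(=, *ptr, old, new); h(NOOP) is immutable. *)
Definition gcasPtr (H : nat -> nat * Resp RES) (ptr : Ptr)
    (old new : nat * Resp RES)
  : (nat -> nat * Resp RES) -> Prop :=
  fun H' => match ptr with
  | PNoop => H' = H
  | PH q => (H q = old /\ H' = upd H q new) \/ (H q <> old /\ H' = H)
  end.

Definition setL (c : Config) (p : nat) (l : Local) : Config :=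
  mkConfig (Cv c) (Av c) (Sv c) (Hv c) (upd (Lv c) p l).

Definition withPC (l : Local) (n : PC) : Local :=
  mkLocal n (cnt l) (myop l) (lt l) (ts l) (ss l) (rs l) (ps l) (tA l) (oA l) (pA l).

Inductive step (p : nat) (c c' : Config) : Prop :=
  (* line 1: invocation of DoOp(o) *)
  | st_invoke (o : OP) :
      pc (Lv c p) = Idle ->
      c' = setL c p (let l := Lv c p in
             mkLocal L2 (S (cnt l)) (OpN o) (lt l) (ts l) (ss l) (rs l) (ps l)
                     (tA l) (oA l) (pA l)) ->
      step p c c'
  (* line 2: t := F&I(C) *)
  | st_fai :
      pc (Lv c p) = L2 ->
      c' = mkConfig (S (Cv c)) (Av c) (Sv c) (Hv c)
             (upd (Lv c) p (let l := Lv c p in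
                mkLocal L3 (cnt l) (myop l) (Cv c) (ts l) (ss l) (rs l) (ps l)
                        (tA l) (oA l) (pA l))) ->
      step p c c'
  (* line 3: H_p := (t, NULL) *)
  | st_init :
      pc (Lv c p) = L3 ->
      c' = mkConfig (Cv c) (Av c) (Sv c) (upd (Hv c) p (lt (Lv c p), RNull))
             (upd (Lv c) p (withPC (Lv c p) L4)) ->
      step p c c'
  | st_loop_in :
      pc (Lv c p) = L4 -> Hv c p = (lt (Lv c p), RNull) ->
      c' = setL c p (withPC (Lv c p) L5) ->
      step p c c'
  | st_loop_out :
      pc (Lv c p) = L4 -> Hv c p <> (lt (Lv c p), RNull) ->
      c' = setL c p (withPC (Lv c p) L14) ->
      step p c c'
  (* line 5: (t', s', r', roptr') := S [starred variables] *)
  | st_readS (t0 : nat) (s1 : Q) (r1 : Resp RES) (p1 : Ptr) :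
      pc (Lv c p) = L5 -> Sv c = (t0, s1, r1, p1) ->
      c' = setL c p (let l := Lv c p in
             mkLocal L6 (cnt l) (myop l) (lt l) t0 s1 r1 p1 (tA l) (oA l) (pA l)) ->
      step p c c'
  (* line 6: GCAS(=, deref roptr_star, (t_star, NULL), (t_star, r_star)) *)
  | st_help (H' : nat -> nat * Resp RES) :
      pc (Lv c p) = L6 ->
      gcasPtr (Hv c) (ps (Lv c p)) (ts (Lv c p), RNull) (ts (Lv c p), rs (Lv c p)) H' ->
      c' = mkConfig (Cv c) (Av c) (Sv c) H' (upd (Lv c) p (withPC (Lv c p) L7)) ->
      step p c c'
  (* line 7: GCAS(>, A, (t,-,-), (t, o, &H_p)) *)
  | st_announce_ok :
      pc (Lv c p) = L7 -> fst (fst (Av c)) > lt (Lv c p) ->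
      c' = mkConfig (Cv c) (lt (Lv c p), myop (Lv c p), PH p) (Sv c) (Hv c)
             (upd (Lv c) p (withPC (Lv c p) L8)) ->
      step p c c'
  | st_announce_fail :
      pc (Lv c p) = L7 -> ~ (fst (fst (Av c)) > lt (Lv c p)) ->
      c' = setL c p (withPC (Lv c p) L8) ->
      step p c c'
  (* line 8: (t', o', roptr') := A *)
  | st_readA (t1 : nat) (o1 : OpName OP) (p1 : Ptr) :
      pc (Lv c p) = L8 -> Av c = (t1, o1, p1) ->
      c' = setL c p (let l := Lv c p in
             mkLocal L9 (cnt l) (myop l) (lt l) (ts l) (ss l) (rs l) (ps l) t1 o1 p1) ->
      step p c c'
  (* lines 9-10: read *roptr' and test it against (t', NULL) *)
  | st_check_pending :
      pc (Lv c p) = L9 -> deref c (pA (Lv c p)) = (tA (Lv c p), RNull) ->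
      c' = setL c p (withPC (Lv c p) L12) ->
      step p c c'
  | st_check_done :
      pc (Lv c p) = L9 -> deref c (pA (Lv c p)) <> (tA (Lv c p), RNull) ->
      c' = setL c p (withPC (Lv c p) L13) ->
      step p c c'
  (* lines 11-12: (s', r') := apply(o', s_star);
     GCAS(=, S, (t_star, s_star, r_star, roptr_star), (t', s', r', roptr')) *)
  | st_apply_ok :
      pc (Lv c p) = L12 ->
      Sv c = (ts (Lv c p), ss (Lv c p), rs (Lv c p), ps (Lv c p)) ->
      c' = mkConfig (Cv c)  (Av c)
             (let l := Lv c p in
              (tA l, fst (applyU (oA l) (ss l)), snd (applyU (oA l) (ss l)), pA l))
             (Hv c) (upd (Lv c) p (withPC (Lv c p) L4)) ->
      step p c c'
  | st_apply_fail :
      pc (Lv c p) = L12 ->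
      Sv c <> (ts (Lv c p), ss (Lv c p), rs (Lv c p), ps (Lv c p)) ->
      c' = setL c p (withPC (Lv c p) L4) ->
      step p c c'
  (* line 13: GCAS(=, A, (t', o', roptr'), (t, o, &H_p)) *)
  | st_replace_ok :
      pc (Lv c p) = L13 -> Av c = (tA (Lv c p), oA (Lv c p), pA (Lv c p)) ->
      c' = mkConfig (Cv c) (lt (Lv c p), myop (Lv c p), PH p) (Sv c) (Hv c)
             (upd (Lv c) p (withPC (Lv c p) L4)) ->
      step p c c'
  | st_replace_fail :
      pc (Lv c p) = L13 -> Av c <> (tA (Lv c p), oA (Lv c p), pA (Lv c p)) ->
      c' = setL c p (withPC (Lv c p) L4) ->
      step p c c'
  (* line 14: return H_p.response *)
  | st_return :
      pc (Lv c p) = L14 ->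
      c' = setL c p (withPC (Lv c p) Idle) ->
      step p c c'.

(* Crashes are
   modelled by processes that are no longer scheduled. *)
Definition execution (ex : nat -> Config) (sched : nat -> nat) : Prop :=
  ex 0 = config0 /\ forall i, step (sched i) (ex i) (ex (S i)).

(* Operations: the initial NOOP, or the k-th invocation (k >= 1) of DoOp by
   process p. *)
Inductive OpId : Type := NoopOp | Inv (p k : nat).

(* t(o) = v : the F&I at line 2 of o returned v (t(NOOP) = 0).  If line 2 of o
   is never executed, t(o) = infinity, i.e. opTime o v holds for no v. *)
Definition opTime (ex : nat -> Config) (sched : nat -> nat) (o : OpId) (v : nat) : Prop :=
  match o with
  | NoopOp => v = 0
  | Inv p k => exists i, sched i = p /\ pc (Lv (ex i) p) = L2 /\
                         cnt (Lv (ex i) p) = k /\ Cv (ex i) = v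
  end.

Definition hOf (o : OpId) : Ptr :=
  match o with NoopOp => PNoop | Inv p _ => PH p end.

Definition isDone (ex : nat -> Config) (sched : nat -> nat) (o : OpId) (N : nat) : Prop :=
  exists v, opTime ex sched o v /\
    exists T' r, T' <= N /\ deref (ex T') (hOf o) = (v, r) /\ r <> RNull.

End Model.

(* Main.v *)
Require Import Defs.
From Stdlib Require Import Arith Lia.

Section S.
Variables (OP RES Q : Type) (applyT : OP -> Q -> Q * RES).
Notation Cfg := (Config OP RES Q).

Definition inloop (x : PC) : Prop :=
  match x with L4|L5|L6|L7|L8|L9|L12|L13 => True | _ => False end.
Definition Rinv (c : Cfg) : Prop :=
  snd (fst (Sv c)) <> RNull /\ forall r, rs (Lv c r) <> RNull.
Definition Linv (c : Cfg) := forall p, inloop (pc (Lv c p)) -> fst (Hv c p) = lt (Lv c p).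
Definition Good (D : nat -> nat -> Prop) (c : Cfg) (v : nat) (ptr : Ptr) : Prop :=
  match ptr with PNoop => True
  | PH p => D v p \/ (Hv c p = (v, RNull) /\ inloop (pc (Lv c p)) /\ lt (Lv c p) = v) end.
Definition PairIn (c : Cfg) v ptr : Prop :=
  (v = fst (fst (fst (Sv c))) /\ ptr = snd (Sv c)) \/ (v = fst (fst (Av c)) /\ ptr = snd (Av c)) \/
  exists r, (v = ts (Lv c r) /\ ptr = ps (Lv c r)) \/ (v = tA (Lv c r) /\ ptr = pA (Lv c r)).
Definition AllGood D c := forall v ptr, PairIn c v ptr -> Good D c v ptr.

Lemma gcas_cases (H : nat -> nat * Resp RES) ptr t r H' :
  gcasPtr H ptr (t,RNull) (t,r) H' ->
  forall q, H' q = H q \/ (H q = (t,RNull) /\ H' q = (t,r)).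
Proof.
  destruct ptr as [|q0]; simpl; intros G q.
  - subst; auto.
  - destruct G as [[E1 E2]|[E1 E2]]; subst; unfold upd; auto.
    destruct (Nat.eqb_spec q q0); subst; auto.
Qed.

Lemma applyU_nn o (s : Q) : snd (applyU applyT o s) <> RNull.
Proof. destruct o; simpl. discriminate. destruct (applyT o s); simpl; discriminate. Qed.

Lemma R_step s (c c' : Cfg) : step applyT s c c' -> Rinv c -> Rinv c'.
Proof.
  intros Hs [HS HL]; destruct Hs; subst c'; unfold Rinv, setL, withPC, upd in *; simpl in *;
  split; try assumption; try apply applyU_nn;
  intros r; destruct (Nat.eqb r s); simpl; auto.
  all: match goal with E : Sv _ = _ |- _ => rewrite E in HS; exact HS end.
Qed.

Lemma L_step s (c c' : Cfg) : step applyT s c c' -> Linv c -> Linv c'.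
Proof.
  intros Hs HL p; destruct Hs; subst c'; unfold Linv, setL, withPC, upd in *; simpl in *;
  destruct (Nat.eqb_spec p s); subst; simpl in *; auto; try (intros []; fail).
  all: try (rewrite e in *; simpl in *; intros []; fail).
  all: intros Hin; try (apply HL; match goal with E : pc _ = _ |- _ => rewrite E end; exact I).
  all: match goal with G : gcasPtr _ _ _ _ _ |- _ => pose proof (gcas_cases _ _ _ _ _ G) as GC end.
  - assert (Hs : inloop (pc (Lv c s))) by (rewrite H; exact I).
    destruct (GC s) as [E|[E1 E2]]; [rewrite E; auto|rewrite E2; rewrite <- (HL s Hs), E1; auto].
  - destruct (GC p) as [E|[E1 E2]]; [rewrite E; auto|rewrite E2; rewrite <- (HL p Hin), E1; auto].
Qed.


Lemma H_step s (c c' : Cfg) p : step applyT s c c' -> Rinv c -> inloop (pc (Lv c p)) ->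
  Hv c' p = Hv c p \/ (exists t r, Hv c p = (t,RNull) /\ Hv c' p = (t,r) /\ r <> RNull).
Proof.
  intros Hs [HS HL] Hin; destruct Hs; subst c'; unfold setL, withPC, upd in *; simpl in *; auto.
  - destruct (Nat.eqb_spec p s); subst; auto. rewrite H in Hin; destruct Hin.
  - destruct (gcas_cases _ _ _ _ _ H0 p) as [E|[E1 E2]]; auto.
    right; do 2 eexists; split; [exact E1|split; [exact E2|apply HL]].
Qed.

Lemma loop_step s (c c' : Cfg) p : step applyT s c c' -> inloop (pc (Lv c p)) ->
  Hv c' p = (lt (Lv c p), RNull) -> inloop (pc (Lv c' p)) /\ lt (Lv c' p) = lt (Lv c p).
Proof.
  intros Hs Hin HH; destruct Hs; subst c'; unfold setL, withPC, upd in *; simpl in *;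
  destruct (Nat.eqb_spec p s); subst; simpl; auto;
  try (rewrite H in Hin; destruct Hin; fail); try (split; [exact I|reflexivity]).
Qed.

Lemma good_step (D D' : nat -> nat -> Prop) s (c c' : Cfg) v ptr :
  step applyT s c c' -> Rinv c ->
  (forall v p r, Hv c' p = (v,r) -> r <> RNull -> D' v p) ->
  (forall v p, D v p -> D' v p) -> Good D c v ptr -> Good D' c' v ptr.
Proof.
  intros Hs HR HD' HDD G; destruct ptr as [|p]; simpl in *; auto.
  destruct G as [G|[E [Hin Hlt]]]; [left; auto|].
  destruct (H_step _ _ _ p Hs HR Hin) as [E'|[t [r [E1 [E2 Hr]]]]].
  - right. rewrite E'. destruct (loop_step _ _ _ p Hs Hin) as [A B]; [rewrite E', E, Hlt; auto|].
    split; [auto|split; [auto|congruence]].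
  - left. rewrite E in E1. injection E1 as <-. eapply HD'; eauto.
Qed.

Ltac fin := first [reflexivity | match goal with E : Sv _ = _ |- _ => rewrite E; reflexivity end | match goal with E : Av _ = _ |- _ => rewrite E; reflexivity end].
Ltac solvep x := left; first [ left; split; fin | right; left; split; fin | right; right; exists x; first [left; split; fin | right; split; fin]].

Lemma pairs_step s (c c' : Cfg) v ptr : step applyT s c c' -> PairIn c' v ptr ->
  PairIn c v ptr \/ (inloop (pc (Lv c s)) /\ v = lt (Lv c s) /\ ptr = PH s /\ Hv c' s = Hv c s).
Proof.
  intros Hs HP; destruct Hs; subst c'; unfold PairIn, setL, withPC, upd in *; simpl in *.
  all: destruct HP as [[-> ->]|[[-> ->]|[r [[-> ->]|[-> ->]]]]];
    try (destruct (Nat.eqb_spec r s); subst; simpl).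
  all: first [solvep s | solvep r | right; split; [match goal with E : pc _ = _ |- _ => rewrite E end; exact I | split; [reflexivity| split; reflexivity]]].
Qed.

Definition InvC D (c : Cfg) := Rinv c /\ Linv c /\ AllGood D c.

Lemma inv_step (D D' : nat -> nat -> Prop) s (c c' : Cfg) :
  step applyT s c c' -> InvC D c ->
  (forall v p r, Hv c' p = (v,r) -> r <> RNull -> D' v p) ->
  (forall v p, D v p -> D' v p) -> InvC D' c'.
Proof.
  intros Hs [HR [HL HG]] HD' HDD.
  split; [eapply R_step; eauto|split; [eapply L_step; eauto|]].
  intros v ptr HP. destruct (pairs_step _ _ _ _ _ Hs HP) as [HP0|[Hin [-> [-> HH]]]].
  - eapply good_step; eauto.
  - pose proof (HL s Hin) as F. destruct (Hv c s) as [t r] eqn:E. simpl in F; subst t.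
    destruct r.
    + apply (good_step D D' s c c' _ _ Hs HR HD' HDD); simpl; right; split; [exact E|split; [exact Hin|reflexivity]].
    + simpl; left; eapply HD'; [exact HH| discriminate].
    + simpl; left; eapply HD'; [exact HH| discriminate].
Qed.
End S.

Theorem mainTheorem6 (OP RES Q : Type) (s0 : Q) (applyT : OP -> Q -> Q * RES)
  (ex : nat -> Config OP RES Q) (sched : nat -> nat)
  (Hex : execution s0 applyT ex sched)
  (T q : nat) (o : OpId) (v : nat) :
  sched T = q ->
  pc (Lv (ex T) q) = L6 ->
  opTime ex sched o v ->
  ts (Lv (ex T) q) = v ->
  ps (Lv (ex T) q) = hOf o ->
  isDone ex sched o (S T).
Proof.
  intros Hq Hpc Hop Hts Hps.
  destruct Hex as [H0 Hst].
  set (D := fun i v p => exists T' r, T' <= i /\ Hv (ex T') p = (v,r) /\ r <> RNull).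
  assert (HI : forall i, @InvC OP RES Q (D i) (ex i)).
  { induction i.
    - rewrite H0. split; [|split].
      + split; simpl; discriminate.
      + intros p; simpl; intros [].
      + intros v' ptr HP; unfold PairIn in HP; simpl in HP.
        destruct HP as [[_ ->]|[[_ ->]|[r [[_ ->]|[_ ->]]]]]; exact I.
    - eapply inv_step; [apply Hst|exact IHi| |].
      + intros v' p r E Hr. exists (S i), r; auto.
      + intros v' p [T' [r [Hle R]]]. exists T', r; split; [lia|exact R]. }
  destruct (HI T) as [HR [HL HG]].
  assert (HP : @PairIn OP RES Q (ex T) v (ps (Lv (ex T) q))).
  { right; right; exists q; left; auto. }
  specialize (HG _ _ HP).
  destruct o as [|p k].
  - simpl in Hop. subst v. exists 0; split; [reflexivity|].
    exists 0, RBot; split; [lia|split; [reflexivity|discriminate]].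
  - exists v; split; [exact Hop|]. rewrite Hps in HG; simpl in HG.
    destruct HG as [[T' [r [Hle [E Hr]]]]|[E _]].
    + exists T', r; split; [lia|split; [exact E|exact Hr]].
    + pose proof (Hst T) as St. rewrite Hq in St.
      destruct St; try congruence.
      rewrite Hps, Hts in H1. simpl in H1.
      destruct H1 as [[_ ->]|[N _]]; [|congruence].
      exists (S T), (rs (Lv (ex T) q)); split; [lia|split].
      * rewrite H2; simpl; unfold upd; rewrite Nat.eqb_refl; reflexivity.
      * apply (proj2 HR).
Qed.
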